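(* There is a constant $C>0$ such that for every proper binary tree $\mathcal T$ with $n\ge2$ leaves (labeled as below), the matrix $\mathbf M_{\mathcal T}\in\mathrm{GL}(n,2)$ is a product of at most $C\log^2 n$ parallel row-elimination matrices. That is, the CNOT circuit $\mathbf M_{\mathcal T}$ can be parallelized to depth $O(\log^2 n)$ without ancillae.
   Context: $\mathsf R(i,j)=\mathbf I+\mathbf 1_{j,i}$ over $\mathbb F_2$, where $\mathbf 1_{j,i}$ is the matrix with a single $1$ in entry $(j,i)$. Left-multiplying by $\mathsf R(i,j)$ adds row $i$ to row $j$, i.e., it is a CNOT gate with control $i$ and target $j$. A parallel row-elimination matrix is $\mathbf I$ or $\mathbf I+\sum_{k=1}^t\mathbf 1_{j_k,i_k}$, where the $2t$ indices $i_k,j_k$ are pairwise distinct. CNOT tree: $\mathcal T$ is a proper binary tree (each internal node has exactly two children, a left child and a right child). Its $n$ leaves carry distinct labels from $[n]$, and each internal node carries a label in $\{L,R\}$. Each node $v$ receives a qubit index $i(v)$, and each internal node $v$ a matrix $\mathbf M_v$, as follows. Write $c_L,c_R$ for the left and right children of $v$. - If $v$ is a leaf, $i(v)$ is its label. - If $v$ is internal with label $L$, then $i(v)=i(c_L)$ and $\mathbf M_v=\mathsf R(i(c_R),i(c_L))$. - If $v$ is internal with label $R$, then $i(v)=i(c_R)$ and $\mathbf M_v=\mathsf R(i(c_L),i(c_R))$. If $v_1,\dots,v_{n-1}$ are the internal nodes listed in postorder, then $\mathbf M_{\mathcal T}=\mathbf M_{v_{n-1}}\cdots\mathbf M_{v_2}\mathbf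 M_{v_1}$. *)

(* Defs.v *)
From HB Require Import structures.
From mathcomp Require Import all_boot all_order all_algebra.
Set Implicit Arguments. Unset Strict Implicit. Unset Printing Implicit Defensive.
Import GRing.Theory.
Local Open Scope ring_scope.

Notation mxF2 n := 'M['F_2]_n.

(* R(i,j) = I + 1_{j,i} : adds row i to row j (CNOT control i, target j) *)
Definition Rmx (n : nat) (i j : 'I_n) : mxF2 n := 1%:M + delta_mx j i.

Definition parallel_elim (n : nat) (A : mxF2 n) : Prop :=
  exists s : seq ('I_n * 'I_n),
    uniq (flatten [seq [:: p.1; p.2] | p <- s]) /\
    A = 1%:M + \sum_(p <- s) delta_mx p.2 p.1.

(* Proper binary trees: leaves carry a qubit label in 'I_n,
   internal nodes carry a label L (false) or R (true). *)
Inductive ctree (n : nat) : Type :=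
| CLeaf : 'I_n -> ctree n
| CNode : bool -> ctree n -> ctree n -> ctree n.

Arguments CLeaf {n}.
Arguments CNode {n}.

Definition isR (b : bool) := b.

Fixpoint leaves (n : nat) (t : ctree n) : seq 'I_n :=
  match t with
  | CLeaf i => [:: i]
  | CNode _ l r => leaves l ++ leaves r
  end.

Fixpoint qidx (n : nat) (t : ctree n) : 'I_n :=
  match t with
  | CLeaf i => i
  | CNode b l r => if isR b then qidx r else qidx l
  end.

Definition node_mx (n : nat) (b : bool) (l r : ctree n) : mxF2 n :=
  if isR b then Rmx (qidx l) (qidx r) else Rmx (qidx r) (qidx l).

(* M_T = M_{v_{n-1}} ... M_{v_1}, internal nodes in postorder
   (left subtree, right subtree, root). *)
Fixpoint tree_mx (n : nat) (t : ctree n) : mxF2 n :=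
  match t with
  | CLeaf _ => 1%:M
  | CNode b l r => node_mx b l r *m (tree_mx r *m tree_mx l)
  end.

Definition well_labeled (n : nat) (t : ctree n) : Prop :=
  uniq (leaves t) /\ size (leaves t) = n.

Definition mxprod (n : nat) (ms : seq (mxF2 n)) : mxF2 n :=
  foldr (fun A B => A *m B) 1%:M ms.

(* Main.v *)
Require Import Defs.
From HB Require Import structures.
From mathcomp Require Import all_boot all_order all_algebra.
From mathcomp Require Import ring zify.
Set Implicit Arguments. Unset Strict Implicit. Unset Printing Implicit Defensive.
Import GRing.Theory.
Local Open Scope ring_scope.


Lemma addxx (x : 'F_2) : x + x = 0.
Proof. by case: x => [[|[|//]] ?]; apply/val_inj. Qed.

Definition vec n := 'I_n -> 'F_2.
Definition layer n := seq ('I_n * 'I_n).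

Fixpoint ld {n} (L : layer n) (v : vec n) (k : 'I_n) : 'F_2 :=
  match L with
  | [::] => 0
  | p :: L' => ld L' v k + (if k == p.2 then v p.1 else 0)
  end.
Definition lsem {n} (L : layer n) (v : vec n) : vec n := fun k => v k + ld L v k.
Definition csem {n} (c : seq (layer n)) (v : vec n) : vec n := foldr lsem v c.
Definition supp {n} (L : layer n) := flatten [seq [:: p.1; p.2] | p <- L].
Definition valid {n} (L : layer n) := uniq (supp L).
Definition csupp {n} (c : seq (layer n)) := flatten (map supp c).

Lemma supp_cons n (p : 'I_n * 'I_n) L : supp (p :: L) = p.1 :: p.2 :: supp L.
Proof. by []. Qed.
Lemma supp_cat n (L1 L2 : layer n) : supp (L1 ++ L2) = supp L1 ++ supp L2.
Proof. by rewrite /supp map_cat flatten_cat. Qed.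
Lemma csupp_cons n (L : layer n) c : csupp (L :: c) = supp L ++ csupp c.
Proof. by []. Qed.

Lemma ld_cat n (L1 L2 : layer n) v k : ld (L1 ++ L2) v k = ld L1 v k + ld L2 v k.
Proof. by elim: L1 => [|p L IH] /=; rewrite ?add0r // IH addrAC. Qed.

Lemma ld_out n (L : layer n) v k : k \notin supp L -> ld L v k = 0.
Proof.
elim: L => [//|p L IH]; rewrite supp_cons !inE !negb_or => /and3P[_ hk hs] /=.
by rewrite IH // (negbTE hk) addr0.
Qed.

Lemma ld_eq n (L : layer n) v w k : {in supp L, v =1 w} -> ld L v k = ld L w k.
Proof.
elim: L => [//|p L IH] H /=; rewrite IH ?H ?supp_cons ?inE ?eqxx //.
by move=> x xL; apply: H; rewrite supp_cons !inE xL !orbT.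
Qed.

Lemma lsem_ext n (L : layer n) v w : v =1 w -> lsem L v =1 lsem L w.
Proof. by move=> H k; rewrite /lsem H; congr (_ + _); apply: ld_eq => x _. Qed.

Lemma csem_ext n (c : seq (layer n)) v w : v =1 w -> csem c v =1 csem c w.
Proof. by elim: c => [//|L c IH] H /=; apply: lsem_ext; apply: IH. Qed.

Lemma csem_cat n (c1 c2 : seq (layer n)) v : csem (c1 ++ c2) v = csem c1 (csem c2 v).
Proof. by rewrite /csem foldr_cat. Qed.

Definition local n (S : seq 'I_n) (f : vec n -> vec n) :=
  (forall v k, k \notin S -> f v k = v k) /\
  (forall v w, {in S, v =1 w} -> {in S, f v =1 f w}).

Lemma local_ext n S (f g : vec n -> vec n) :
  (forall v, f v =1 g v) -> local S f -> local S g.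
Proof.
move=> E [H1 H2]; split=> [v k kS|v w vw k kS]; first by rewrite -E H1.
by rewrite -!E (H2 v w).
Qed.

Lemma local_comp n S (f g : vec n -> vec n) : local S f -> local S g -> local S (f \o g).
Proof.
move=> [F1 F2] [G1 G2]; split=> [v k kS|v w vw k kS] /=; first by rewrite F1 // G1.
by apply: F2 => //; apply: G2.
Qed.

Lemma local_sub n (S T : seq 'I_n) f : {subset S <= T} -> local S f -> local T f.
Proof.
move=> sub [F1 F2]; split=> [v k kT|v w vw k kT].
  by apply: F1; apply: contra kT; apply: sub.
case kS: (k \in S); first by apply: F2 => // x xS; apply: vw; apply: sub.
by rewrite !F1 ?kS // vw.
Qed.

Lemma local_id n S : local S (@id (vec n)).
Proof. by split=> // v w vw k kS; apply: vw. Qed.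

Lemma local_commute n S T (f g : vec n -> vec n) :
  local S f -> local T g -> (forall x, x \in S -> x \notin T) ->
  forall v, f (g v) =1 g (f v).
Proof.
move=> [F1 F2] [G1 G2] dis v k.
case kS: (k \in S).
  have kT := dis _ kS.
  rewrite (G1 _ _ kT) (F2 (g v) v) // => x xS; exact: G1 _ _ (dis _ xS).
case kT: (k \in T).
  rewrite (F1 (g v) k (negbT kS)) (G2 (f v) v) // => x xT.
  by apply: F1; apply/negP => xS; move: (dis _ xS); rewrite xT.
by rewrite (F1 (g v) k) ?kS // (G1 v k) ?kT // (G1 (f v) k) ?kT // (F1 v k) ?kS.
Qed.

Lemma lsem_local n (L : layer n) : local (supp L) (lsem L).
Proof.
split=> [v k kS|v w vw k kS]; first by rewrite /lsem ld_out // addr0.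
by rewrite /lsem vw // (ld_eq (w:=w)).
Qed.

Lemma csem_local n (c : seq (layer n)) : local (csupp c) (csem c).
Proof.
elim: c => [|L c IH] /=; first exact: local_id.
apply: (@local_comp _ _ (lsem L) (csem c)).
  by apply: local_sub (lsem_local L) => x; rewrite csupp_cons mem_cat => ->.
by apply: local_sub IH => x; rewrite csupp_cons mem_cat orbC => ->.
Qed.

Lemma lsem_cat n (L1 L2 : layer n) v :
  (forall x, x \in supp L1 -> x \notin supp L2) ->
  lsem (L1 ++ L2) v =1 lsem L1 (lsem L2 v).
Proof.
move=> dis k; rewrite /lsem ld_cat addrA addrAC; congr (_ + _).
apply: ld_eq => x xS; rewrite /lsem ld_out ?addr0 //; exact: dis.
Qed.

Fixpoint mergec n (c1 c2 : seq (layer n)) : seq (layer n) :=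
  match c1, c2 with
  | L1 :: c1', L2 :: c2' => (L1 ++ L2) :: mergec c1' c2'
  | [::], c => c
  | c, [::] => c
  end.

Lemma merge_sem n (c1 c2 : seq (layer n)) v :
  (forall x, x \in csupp c1 -> x \notin csupp c2) ->
  csem (mergec c1 c2) v =1 csem c1 (csem c2 v).
Proof.
elim: c1 c2 v => [|L1 c1 IH] [|L2 c2] v dis k //=.
have dis' : forall x, x \in csupp c1 -> x \notin csupp c2.
  move=> x xc; have := dis x; rewrite !csupp_cons !mem_cat xc orbT => /(_ isT).
  by rewrite negb_or => /andP[].
rewrite lsem_cat; last first.
  move=> x xL; have := dis x; rewrite !csupp_cons !mem_cat xL => /(_ isT).
  by rewrite negb_or => /andP[].
rewrite (lsem_ext _ (lsem_ext _ (IH c2 v dis'))).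
apply: lsem_ext => j.
apply: (local_commute (lsem_local L2) (csem_local c1)) => x xL.
apply/negP => xc; have := dis x; rewrite !csupp_cons !mem_cat xc orbT xL.
by move/(_ isT).
Qed.

Lemma merge_valid n (c1 c2 : seq (layer n)) :
  (forall x, x \in csupp c1 -> x \notin csupp c2) ->
  all valid c1 -> all valid c2 -> all valid (mergec c1 c2).
Proof.
elim: c1 c2 => [|L1 c1 IH] [|L2 c2] dis //= /andP[v1 a1] /andP[v2 a2].
apply/andP; split.
  rewrite /valid supp_cat cat_uniq; move: v1 v2; rewrite /valid => -> -> /=; rewrite andbT.
  apply/hasPn => x xL2; apply/negP => xL1.
  have := dis x; rewrite !csupp_cons !mem_cat xL1 => /(_ isT).
  by rewrite xL2.
apply: IH => // x xc; have := dis x; rewrite !csupp_cons !mem_cat xc orbT => /(_ isT).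
by rewrite negb_or => /andP[].
Qed.

Lemma merge_size n (c1 c2 : seq (layer n)) : size (mergec c1 c2) = maxn (size c1) (size c2).
Proof.
elim: c1 c2 => [|L1 c1 IH] [|L2 c2] //=; try by rewrite ?max0n ?maxn0.
by rewrite IH maxnSS.
Qed.

Lemma merge_csupp n (c1 c2 : seq (layer n)) x :
  x \in csupp (mergec c1 c2) -> (x \in csupp c1) || (x \in csupp c2).
Proof.
elim: c1 c2 => [|L1 c1 IH] [|L2 c2] //=; try by move=> ->; rewrite ?orbT.
rewrite !csupp_cons supp_cat !mem_cat -!orbA => /orP[->//|/orP[->|/IH]].
  by rewrite !orbT.
by case/orP=> ->; rewrite !orbT.
Qed.


Lemma ld_out2 n (L : layer n) v k : k \notin map snd L -> ld L v k = 0.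
Proof.
elim: L => [//|p L IH]; rewrite /= inE negb_or => /andP[hk hs].
by rewrite IH // (negbTE hk) addr0.
Qed.

Lemma ld_eq2 n (L : layer n) v w k : {in map fst L, v =1 w} -> ld L v k = ld L w k.
Proof.
elim: L => [//|p L IH] H /=; rewrite IH ?H ?inE ?eqxx //.
by move=> x xL; apply: H; rewrite inE xL orbT.
Qed.

Lemma mem_supp n (L : layer n) x : (x \in supp L) = (x \in map fst L) || (x \in map snd L).
Proof.
elim: L => [//|p L IH]; rewrite supp_cons /= !inE IH.
by case: (x == p.1); case: (x == p.2); case: (x \in map fst L); case: (x \in map snd L).
Qed.

Lemma valid_ctrl n (L : layer n) x : valid L -> x \in map fst L -> x \notin map snd L.
Proof.
elim: L => [//|p L IH]; rewrite /valid supp_cons /= !inE !negb_or.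
move=> /andP[/andP[h12 h1L] /andP[h2L hu]] /orP[/eqP->|xL].
  by rewrite h12 /=; apply: contra h1L; rewrite mem_supp => ->; rewrite orbT.
rewrite IH // andbT; apply/eqP => E; move: h2L; rewrite -E mem_supp xL.
by [].
Qed.


Lemma lsem_invol n (L : layer n) v : valid L -> lsem L (lsem L v) =1 v.
Proof.
move=> vL k; rewrite /lsem (@ld_eq2 _ L (fun k => v k + ld L v k) v).
  by rewrite -addrA addxx addr0.
by move=> x xL; rewrite ld_out2 ?addr0 //; apply: valid_ctrl.
Qed.

Lemma csem_rev_inv n (c : seq (layer n)) w : all valid c -> csem c (csem (rev c) w) =1 w.
Proof.
elim: c w => [//|L c IH] w /andP[vL vc] k.
rewrite rev_cons -cats1 csem_cat /=.
rewrite (lsem_ext _ (IH _ vc)).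
by apply: lsem_invol.
Qed.

Lemma csem_inv_rev n (c : seq (layer n)) w : all valid c -> csem (rev c) (csem c w) =1 w.
Proof.
move=> vc; have := @csem_rev_inv n (rev c) w; rewrite revK; apply.
by rewrite all_rev.
Qed.

(* prefix sums *)
Fixpoint pairs {T : Type} (s : seq T) : seq (T * T) :=
  match s with a :: (b :: t) => (a, b) :: pairs t | _ => [::] end.
Fixpoint odds {T : Type} (s : seq T) : seq T :=
  match s with a :: (b :: t) => b :: odds t | _ => [::] end.

Fixpoint pref n (c : 'F_2) (s : seq 'I_n) (v : vec n) (k : 'I_n) : 'F_2 :=
  match s with
  | [::] => v k
  | a :: s' => if k == a then c + v a else pref (c + v a) s' v k
  end.

Fixpoint dif n (c : 'F_2) (s : seq 'I_n) (v : vec n) (k : 'I_n) : 'F_2 :=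
  match s with
  | [::] => v k
  | a :: s' => if k == a then v a + c else dif (v a) s' v k
  end.

Lemma pref_out n c (s : seq 'I_n) v k : k \notin s -> pref c s v k = v k.
Proof.
elim: s c => [//|a s IH] c; rewrite inE negb_or => /andP[ka ks] /=.
by rewrite (negbTE ka) IH.
Qed.

Lemma pref_ext n c (s : seq 'I_n) v w k : {in k :: s, v =1 w} -> pref c s v k = pref c s w k.
Proof.
elim: s c => [|a s IH] c H /=; first by apply: H; rewrite inE eqxx.
rewrite H ?inE ?eqxx ?orbT //; case: ifP => // _; apply: IH => x.
by rewrite !inE => /orP[/eqP->|xs]; apply: H; rewrite !inE ?eqxx ?xs ?orbT.
Qed.

Lemma dif_out n c (s : seq 'I_n) v k : k \notin s -> dif c s v k = v k.
Proof.
elim: s c => [//|a s IH] c; rewrite inE negb_or => /andP[ka ks] /=.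
by rewrite (negbTE ka) IH.
Qed.

Lemma dif_ext n c (s : seq 'I_n) v w k : {in k :: s, v =1 w} -> dif c s v k = dif c s w k.
Proof.
elim: s c => [|a s IH] c H /=; first by apply: H; rewrite inE eqxx.
rewrite H ?inE ?eqxx ?orbT //; case: ifP => // _; apply: IH => x.
by rewrite !inE => /orP[/eqP->|xs]; apply: H; rewrite !inE ?eqxx ?xs ?orbT.
Qed.

Lemma dif_pref n c (s : seq 'I_n) u k : uniq s -> dif c s (pref c s u) k = u k.
Proof.
elim: s c => [//|a s IH] c /= /andP[as_ us].
rewrite eqxx; case: ifP => [/eqP->|ka]; first by rewrite addrAC addxx add0r.
rewrite -(IH (c + u a) us); apply: dif_ext => x.
rewrite inE => /orP[/eqP->|xs]; first by rewrite ka.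
by case: ifP => // /eqP E; move: as_; rewrite -E xs.
Qed.

Lemma csem_cons n (L : layer n) c v : csem (L :: c) v = lsem L (csem c v).
Proof. by []. Qed.

Lemma seq_ind2 {T : Type} (P : seq T -> Prop) :
  P [::] -> (forall a, P [:: a]) -> (forall a b t, P t -> P [:: a, b & t]) ->
  forall s, P s.
Proof.
move=> H0 H1 H2; suff H : forall s, P s /\ (forall a, P (a :: s)).
  by move=> s; case: (H s).
elim=> [|b t [Pt Pbt]]; split=> // a; exact: H2.
Qed.

Lemma snd_pairs {T : Type} (s : seq T) : map snd (pairs s) = odds s.
Proof. by elim/(@seq_ind2 T): s => //= a b t ->. Qed.

Lemma odds_sub {T : eqType} (s : seq T) : {subset odds s <= s}.
Proof.
elim/(@seq_ind2 T): s => //= a b t IH x; rewrite !inE => /orP[->|/IH ->]; by rewrite !orbT.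
Qed.

Lemma odds_sub_tl {T : eqType} (a : T) s : {subset odds (a :: s) <= s}.
Proof.
case: s => [//|b t] x /=; rewrite !inE => /orP[->//|/odds_sub ->]; by rewrite orbT.
Qed.

Lemma odds_uniq {T : eqType} (s : seq T) : uniq s -> uniq (odds s).
Proof.
elim/(@seq_ind2 T): s => //= a b t IH /and3P[_ bt ut]; rewrite IH // andbT.
by apply: contra bt; apply: odds_sub.
Qed.

Lemma supp_pairs n (s : seq 'I_n) : {subset supp (pairs s) <= s}.
Proof.
elim/(@seq_ind2 'I_n): s => //= a b t IH x; rewrite supp_cons !inE.
by case/or3P=> [->|->|/IH ->]; rewrite ?orbT.
Qed.

Lemma pairs_valid n (s : seq 'I_n) : uniq s -> valid (pairs s).
Proof.
rewrite /valid; elim/(@seq_ind2 'I_n): s => // a b t IH /and3P[abt bt ut].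
rewrite (_ : pairs _ = (a,b) :: pairs t) // supp_cons /= IH // andbT.
rewrite !inE negb_or in abt *; case/andP: abt => ab at_.
rewrite negb_or ab /= (contra (@supp_pairs n t a)) //.
by rewrite (contra (@supp_pairs n t b)).
Qed.

Lemma pairs_cons2 {T : Type} (a b : T) t : pairs [:: a, b & t] = (a, b) :: pairs t.
Proof. by []. Qed.

Lemma lsem_pairs_cons n b (t : seq 'I_n) u k :
  lsem (pairs (b :: t)) u k = lsem (pairs (behead t)) u k
    + (if t is a' :: _ then (if k == a' then u b else 0) else 0).
Proof. by case: t => [|a' t] /=; rewrite /lsem /= ?addr0 // addrA. Qed.

Lemma phi n (s : seq 'I_n) c v k : uniq s ->
  lsem (pairs (behead s)) (pref c (odds s) (lsem (pairs s) v)) k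
   + (if s is a :: _ then (if k == a then c else 0) else 0) = pref c s v k.
Proof.
elim/(@seq_ind2 'I_n): s c k => [c k _|a c k _|a b t IH c k].
- by rewrite /= /lsem /= !addr0.
- by rewrite /= /lsem /=; case: (k =P a) => [->|_]; rewrite ?addr0 // addrC.
move=> /= /and3P[]; rewrite !inE negb_or => /andP[ab at_] bt ut.
set w1 := lsem ((a, b) :: pairs t) v.
have w1E x : w1 x = lsem (pairs t) v x + (if x == b then v a else 0).
  by rewrite /w1 /lsem /= addrA.
have ldt x : x \notin t -> ld (pairs t) v x = 0.
  by move=> xt; apply: ld_out; apply: contra xt; apply: supp_pairs.
set c' := c + v a + v b.
have w1b : c + w1 b = c'.
  by rewrite w1E eqxx /lsem ldt // addr0 /c'; ring.
set u := pref c (b :: odds t) w1.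
set u' := pref c' (odds t) (lsem (pairs t) v).
have uu' x : x != b -> u x = u' x.
  move=> xb; rewrite /u /= (negbTE xb) w1b; apply: pref_ext => y.
  rewrite inE => /orP[/eqP->|yt]; first by rewrite w1E (negbTE xb) addr0.
  rewrite w1E; case: eqP => [E|]; last by rewrite addr0.
  by move: bt; rewrite -E (odds_sub yt).
have ub : u b = c' by rewrite /u /= eqxx.
case: (k =P a) => [->|ka].
  rewrite /lsem ld_out; last by apply/negP => /(@supp_pairs n (b :: t) a); rewrite inE (negbTE ab) (negbTE at_).
  rewrite (negbTE ab) addr0 w1b pref_out; last by apply: contra at_; apply: odds_sub.
  by rewrite w1E (negbTE ab) /lsem ldt // !addr0 addrC.
rewrite addr0.
case: (k =P b) => [->|kb].
  rewrite /lsem (@ld_out2 _ (pairs (b :: t)) _ b); last first.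
    by rewrite snd_pairs; apply: contra bt; apply: odds_sub_tl.
  by rewrite eqxx addr0 w1b.
change (lsem (pairs (b :: t)) u k = pref c' t v k).
case kt: (k \in t); last first.
  rewrite pref_out ?kt // /lsem ld_out; last first.
    by apply/negP => /(@supp_pairs n (b :: t) k); rewrite inE kt orbF => /eqP /kb.
  rewrite uu' ?(introN eqP kb) // /u' pref_out; last by apply: contra (negbT kt); apply: odds_sub.
  by rewrite /lsem ldt ?kt // !addr0.
rewrite -(IH c' k ut).
rewrite lsem_pairs_cons ub; congr (_ + _).
rewrite /lsem (uu' k (introN eqP kb)); congr (_ + _).
apply: ld_eq => x /supp_pairs /mem_behead xs; apply: uu'; apply/eqP => E; move: bt.
by rewrite -E xs.
Qed.

Fixpoint LFf n (f : nat) (s : seq 'I_n) : seq (layer n) :=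
  match f with
  | 0 => [::]
  | f'.+1 => if (size s <= 1)%N then [::]
             else pairs (behead s) :: LFf f' (odds s) ++ [:: pairs s]
  end.
Definition LF n (s : seq 'I_n) := LFf (size s) s.
Definition invLF n (s : seq 'I_n) := rev (LF s).

Lemma size_odds {T : Type} (s : seq T) : ((size (odds s)).*2 <= size s)%N.
Proof.
elim/(@seq_ind2 T): s => //=.
Qed.

Lemma LFf_sem n f (s : seq 'I_n) v : uniq s -> (size s <= f)%N ->
  csem (LFf f s) v =1 pref 0 s v.
Proof.
elim: f s v => [|f IH] s v us sf k.
  by case: s us sf.
rewrite /=; case: ifP => s1.
  by case: s us sf s1 => [|a [|b t]] //= _ _ _; case: ifP => // /eqP->; rewrite add0r.
rewrite csem_cons csem_cat csem_cons (lsem_ext _ (IH _ _ (odds_uniq us) _)); last first.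
  have := size_odds s; move: s1 sf; case: (size s) => [|m] //.
  case: (size (odds s)) => [|o] //= m1 mf; rewrite doubleS !ltnS => h.
  lia.
have := phi 0 v k us.
by case: (s) => [|a t]; rewrite /= ?if_same addr0.
Qed.

Lemma LF_sem n (s : seq 'I_n) v : uniq s -> csem (LF s) v =1 pref 0 s v.
Proof. by move=> us; apply: LFf_sem. Qed.

Lemma behead_uniq' {T : eqType} (s : seq T) : uniq s -> uniq (behead s).
Proof. by case: s => //= a t /andP[]. Qed.

Lemma LFf_valid n f (s : seq 'I_n) : uniq s -> all valid (LFf f s).
Proof.
elim: f s => [|f IH] s us //; rewrite [LFf _ _]/=; case: ifP => // _.
rewrite [all _ _]/= all_cat /= pairs_valid ?behead_uniq' //; apply/andP; split=> //; apply/andP; split; last by rewrite andbT pairs_valid.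
exact: (IH _ (odds_uniq us)).

Qed.

Lemma LFf_supp n f (s : seq 'I_n) : {subset csupp (LFf f s) <= s}.
Proof.
elim: f s => [|f IH] s x //=; case: ifP => // _.
rewrite csupp_cons /csupp map_cat flatten_cat /= cats0 !mem_cat.
case/or3P=> [/supp_pairs /mem_behead //|/IH /odds_sub //|/supp_pairs //].
Qed.

Lemma LFf_size n f (s : seq 'I_n) k : (size s < 2 ^ k)%N -> (size (LFf f s) <= 2 * k)%N.
Proof.
elim: f s k => [|f IH] s k //; rewrite [LFf _ _]/=; case: ifP => // s1 sk.
rewrite /= size_cat /= addn1.
case: k sk => [|k] sk; first by move/negbT: s1; rewrite expn0 in sk; lia.
have : (size (odds s) < 2 ^ k)%N.
  have := size_odds s; move: sk; rewrite expnS -!muln2 => h1 h2.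
  rewrite -(ltn_pmul2r (isT : (0 < 2)%N)); apply: leq_ltn_trans h2 _.
  by rewrite mulnC.
move/(IH _ _) => h; rewrite mulnS add2n ltnS; apply: leq_trans h _.
by [].
Qed.

Lemma invLF_sem n (s : seq 'I_n) w : uniq s -> csem (invLF s) w =1 dif 0 s w.
Proof.
move=> us k; set u := csem (invLF s) w.
have h : pref 0 s u =1 w.
  move=> x; rewrite -LF_sem //; apply: csem_rev_inv.
  exact: LFf_valid.
by rewrite -(dif_pref 0 u k us); apply: dif_ext => x _; rewrite h.
Qed.

Lemma invLF_valid n (s : seq 'I_n) : uniq s -> all valid (invLF s).
Proof. by move=> us; rewrite all_rev; apply: LFf_valid. Qed.

Lemma csupp_rev n (c : seq (layer n)) x : (x \in csupp (rev c)) = (x \in csupp c).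
Proof. by apply: perm_mem; rewrite /csupp map_rev; apply: perm_flatten; rewrite perm_rev. Qed.

Lemma invLF_supp n (s : seq 'I_n) : {subset csupp (invLF s) <= s}.
Proof. by move=> x; rewrite csupp_rev; apply: LFf_supp. Qed.

Lemma LF_size n (s : seq 'I_n) k : (size s < 2 ^ k)%N -> (size (LF s) <= 2 * k)%N.
Proof. exact: LFf_size. Qed.

Lemma invLF_size n (s : seq 'I_n) k : (size s < 2 ^ k)%N -> (size (invLF s) <= 2 * k)%N.
Proof. by rewrite size_rev; exact: LFf_size. Qed.


Fixpoint sumv n (s : seq 'I_n) (v : vec n) : 'F_2 :=
  if s is a :: s' then v a + sumv s' v else 0.

Lemma sumv_ext n (s : seq 'I_n) v w : {in s, v =1 w} -> sumv s v = sumv s w.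
Proof.
elim: s => [//|a s IH] H /=; rewrite H ?inE ?eqxx // IH // => x xs.
by apply: H; rewrite inE xs orbT.
Qed.

Lemma pref_cat n c (s1 s2 : seq 'I_n) v k :
  pref c (s1 ++ s2) v k = if k \in s1 then pref c s1 v k else pref (c + sumv s1 v) s2 v k.
Proof.
elim: s1 c => [|a s1 IH] c /=; first by rewrite addr0.
rewrite inE IH; case: (k == a) => //=; case: ifP => // _.
by rewrite addrA.
Qed.

Definition blocks n := seq ('I_n * seq 'I_n).

Fixpoint catTo n (c : 'F_2) (bs : blocks n) (v : vec n) (k : 'I_n) : 'F_2 :=
  match bs with
  | [::] => v k
  | (h, Y) :: bs' => if k == h then c + sumv Y v + v h
                     else catTo (c + sumv Y v + v h) bs' v k
  end.

Definition elems n (bs : blocks n) := flatten [seq rcons b.2 b.1 | b <- bs].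

Lemma elems_cons n h Y (bs : blocks n) : elems ((h, Y) :: bs) = Y ++ h :: elems bs.
Proof. by rewrite /elems /= -cats1 -catA. Qed.

Lemma catTo_out n c (bs : blocks n) v k : k \notin elems bs -> catTo c bs v k = v k.
Proof.
elim: bs c => [//|[h Y] bs IH] c; rewrite elems_cons mem_cat inE negb_or negb_or.
by case/and3P=> _ kh kb /=; rewrite (negbTE kh) IH.
Qed.

Lemma catTo_ext n c (bs : blocks n) v w k :
  {in k :: elems bs, v =1 w} -> catTo c bs v k = catTo c bs w k.
Proof.
elim: bs c => [|[h Y] bs IH] c H /=; first by apply: H; rewrite inE eqxx.
have HY : {in Y, v =1 w} by move=> x xY; apply: H; rewrite inE elems_cons mem_cat xY orbT.
have Hh : v h = w h by apply: H; rewrite inE elems_cons mem_cat inE eqxx !orbT.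
rewrite (sumv_ext HY) Hh; case: ifP => // _; apply: IH => x.
rewrite inE => /orP[/eqP->|xb]; first by apply: H; rewrite inE eqxx.
by apply: H; rewrite inE elems_cons mem_cat inE xb !orbT.
Qed.

(* caterpillar semantics *)
Definition gate n (f : bool) (acc a : 'I_n) : layer n :=
  [:: if f then (acc, a) else (a, acc)].

Fixpoint catsem n (acc : 'I_n) (st : seq (bool * 'I_n)) (v : vec n) : vec n :=
  match st with
  | [::] => v
  | (f, a) :: st' => catsem (if f then a else acc) st' (lsem (gate f acc a) v)
  end.

Definition consY n (a : 'I_n) (bs : blocks n) : blocks n :=
  if bs is (h, Y) :: bs' then (h, a :: Y) :: bs' else bs.

Fixpoint mkb n (acc : 'I_n) (st : seq (bool * 'I_n)) : blocks n :=
  match st with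
  | [::] => [:: (acc, [::])]
  | (f, a) :: st' => if f then (acc, [::]) :: mkb a st' else consY a (mkb acc st')
  end.

Lemma mkb_head n (acc : 'I_n) st : exists Y bs, mkb acc st = (acc, Y) :: bs.
Proof.
elim: st acc => [|[f a] st IH] acc /=; first by exists [::], [::].
case: f; first by exists [::], (mkb a st).
by have [Y [bs ->]] := IH acc; exists (a :: Y), bs.
Qed.

Lemma elems_mkb n (acc : 'I_n) st : perm_eq (elems (mkb acc st)) (acc :: map snd st).
Proof.
elim: st acc => [|[f a] st IH] acc /=; first by rewrite /elems /=.
case: f; first by rewrite elems_cons /= perm_cons IH.
have [Y [bs E]] := mkb_head acc st; have := IH acc; rewrite E /= !elems_cons /= => H.
by rewrite perm_sym -[acc :: a :: _]/([:: acc] ++ [:: a] ++ _) perm_catCA /= perm_cons perm_sym.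
Qed.

Lemma catTo_shift n c d a Y (bs : blocks n) v v' k :
  uniq (elems ((a, Y) :: bs)) ->
  (forall x, v' x = if x == a then v x + d else v x) ->
  catTo c ((a, Y) :: bs) v' k = catTo (c + d) ((a, Y) :: bs) v k.
Proof.
rewrite elems_cons cat_uniq /= => /and3P[_ aY /andP[ab _]] E /=.
have aY' : a \notin Y by move: aY; rewrite negb_or => /andP[].
rewrite (@sumv_ext _ Y v' v); last by move=> x xY; rewrite E; case: eqP => // xa; move: aY'; rewrite -xa xY.
rewrite E eqxx.
have -> : c + sumv Y v + (v a + d) = c + d + sumv Y v + v a by ring.
case: ifP => // ka; apply: catTo_ext => x; rewrite inE => /orP[/eqP->|xb].
  by rewrite E ka.
by rewrite E; case: eqP => // xa; move: ab; rewrite -xa xb.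
Qed.

Lemma catsemE n (acc : 'I_n) st v k : uniq (acc :: map snd st) ->
  catsem acc st v k = catTo 0 (mkb acc st) v k.
Proof.
elim: st acc v => [|[f a] st IH] acc v /=; first by move=> _; case: ifP => // /eqP->; rewrite !add0r.
rewrite inE negb_or => /andP[/andP[aca accst] /andP[ast ust]].
case: f.
  rewrite IH /=; last by rewrite ast.
  have [Y [bs E]] := mkb_head a st.
  have ue : uniq (elems (mkb a st)) by rewrite (perm_uniq (elems_mkb a st)) /= ast.
  have acce : acc \notin elems (mkb a st) by rewrite (perm_mem (elems_mkb a st)) inE negb_or aca.
  case: ifP => [/eqP->|kacc].
    by rewrite catTo_out // /lsem /= (negbTE aca) !add0r addr0.
  rewrite E (@catTo_shift _ 0 (v acc) a Y bs v) ?add0r -?E //.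
  by move=> x; rewrite /lsem /= add0r; case: eqP => // _; rewrite addr0.
rewrite IH /=; last by rewrite accst.
have [Y [bs E]] := mkb_head acc st.
have ue : uniq (elems (mkb acc st)) by rewrite (perm_uniq (elems_mkb acc st)) /= accst.
rewrite E (@catTo_shift _ 0 (v a) acc Y bs v) -?E //; last first.
  by move=> x; rewrite /lsem /= add0r; case: eqP => // _; rewrite addr0.
rewrite E /= add0r.
have -> : v a + sumv Y v + v acc = 0 + (v a + sumv Y v) + v acc by ring.
by [].
Qed.

Lemma merge_pt n (c1 c2 : seq (layer n)) (S : seq 'I_n) w k :
  {subset csupp c1 <= S} -> (forall x, x \in S -> x \notin csupp c2) ->
  csem (mergec c1 c2) w k = if k \in S then csem c1 w k else csem c2 w k.
Proof.
move=> s1 dis; rewrite merge_sem; last by move=> x /s1; apply: dis.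
have [L1 L2] := local_sub s1 (csem_local c1).
case: ifP => kS.
  apply: L2 => // x xS; have [M1 _] := csem_local c2; exact: M1 _ _ (dis _ xS).
by rewrite L1 ?kS.
Qed.

Fixpoint Zc' n (h : 'I_n) (bs : blocks n) : seq (layer n) :=
  match bs with
  | [::] => [::]
  | (h', Y') :: bs' => mergec (invLF (h :: Y')) (Zc' h' bs')
  end.
Definition Zc n (bs : blocks n) : seq (layer n) :=
  match bs with
  | [::] => [::]
  | (h, Y) :: bs' => mergec (invLF Y) (Zc' h bs')
  end.

Fixpoint zsem' n (h : 'I_n) (bs : blocks n) (w : vec n) (k : 'I_n) : 'F_2 :=
  match bs with
  | [::] => w k
  | (h', Y') :: bs' => if k \in h :: Y' then dif 0 (h :: Y') w k else zsem' h' bs' w k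
  end.
Definition zsem n (bs : blocks n) (w : vec n) (k : 'I_n) : 'F_2 :=
  match bs with
  | [::] => w k
  | (h, Y) :: bs' => if k \in Y then dif 0 Y w k else zsem' h bs' w k
  end.

Lemma Zc'_supp n (h : 'I_n) bs : {subset csupp (Zc' h bs) <= h :: elems bs}.
Proof.
elim: bs h => [|[h' Y'] bs IH] h x //=.
move/merge_csupp => /orP[/invLF_supp|/IH]; rewrite elems_cons !inE mem_cat.
  by case/orP=> ->; rewrite ?orbT.
by rewrite inE; case/orP=> ->; rewrite ?orbT.
Qed.

Lemma Zc_supp n (bs : blocks n) : {subset csupp (Zc bs) <= elems bs}.
Proof.
case: bs => [|[h Y] bs] x //=; move/merge_csupp => /orP[/invLF_supp|/Zc'_supp];
  rewrite elems_cons mem_cat ?inE; first by move=> ->.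
by case/orP=> ->; rewrite ?orbT.
Qed.

Lemma uniq_elems_cons n h Y (bs : blocks n) :
  uniq (elems ((h, Y) :: bs)) -> [/\ uniq Y, h \notin Y, h \notin elems bs,
    uniq (elems bs) & forall x, x \in Y -> x \notin elems bs].
Proof.
rewrite elems_cons cat_uniq /= => /and3P[uY hY /andP[hb ub]].
move: hY; rewrite negb_or => /andP[hY hasY]; split=> // x xY.
by apply: contra hasY => xb; apply/hasP; exists x.
Qed.

Lemma Zc'_sem n (h : 'I_n) bs w k : uniq (h :: elems bs) -> csem (Zc' h bs) w k = zsem' h bs w k.
Proof.
elim: bs h w k => [|[h' Y'] bs IH] h w k //= /andP[hn ue].
have [uY hY hb ub Yb] := uniq_elems_cons ue.
rewrite (@merge_pt _ _ _ (h :: Y')); first last.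
- move=> x xh; apply/negP => /Zc'_supp; rewrite inE.
  move: xh; rewrite inE => /orP[/eqP->|xY].
    by move: hn; rewrite elems_cons mem_cat inE negb_or => /andP[_ /norP[/negbTE-> /negbTE->]].
  case/orP=> [/eqP E|]; first by move: hY; rewrite -E xY.
  by rewrite (negbTE (Yb _ xY)).
- exact: invLF_supp.
case: ifP => kS; first by apply: invLF_sem; rewrite /= uY andbT; move: hn; rewrite elems_cons mem_cat negb_or => /andP[].
by apply: IH; rewrite /= hb.
Qed.

Lemma Zc_sem n (bs : blocks n) w k : uniq (elems bs) -> csem (Zc bs) w k = zsem bs w k.
Proof.
case: bs => [|[h Y] bs] //= ue.
have [uY hY hb ub Yb] := uniq_elems_cons ue.
rewrite (@merge_pt _ _ _ Y); first last.
- move=> x xY; apply/negP => /Zc'_supp; rewrite inE => /orP[/eqP E|].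
    by move: hY; rewrite -E xY.
  by rewrite (negbTE (Yb _ xY)).
- exact: invLF_supp.
case: ifP => kS; first by apply: invLF_sem.
by apply: Zc'_sem; rewrite /= hb.
Qed.

Lemma zsem'_head n (h : 'I_n) bs W : zsem' h bs W h = W h.
Proof. by case: bs => [|[h' Y'] bs] //=; rewrite inE eqxx /= ?eqxx addr0. Qed.

Lemma zsem'_pref n (bs : blocks n) h c v W k :
  uniq (h :: elems bs) -> W h = c ->
  (forall x, x \in elems bs -> W x = pref c (elems bs) v x) -> k != h ->
  zsem' h bs W k = if k \in elems bs then catTo c bs v k else W k.
Proof.
elim: bs h c => [|[h' Y'] bs IH] h c //= /andP[hn ue] Wh WE kh.
have [uY hY hb ub Yb] := uniq_elems_cons ue.
have hY' : h \notin Y' by apply: contra hn; rewrite elems_cons mem_cat => ->.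
have hh' : h != h' by apply: contra hn => /eqP->; rewrite elems_cons mem_cat inE eqxx orbT.
rewrite inE (negbTE kh) /= elems_cons mem_cat inE.
case: ifP => kY.
  rewrite Wh /=.
  have kh' : k != h' by apply: contra hY => /eqP <-.
  rewrite (negbTE kh') catTo_out ?(Yb _ kY) //.
  rewrite -(@dif_pref _ c Y' v k uY); apply: dif_ext => x.
  rewrite inE => /orP[/eqP->|xY]; [rewrite WE|rewrite WE]; rewrite ?elems_cons ?mem_cat ?kY ?xY //.
    by rewrite pref_cat kY.
  by rewrite pref_cat xY.
have Wh' : W h' = c + sumv Y' v + v h'.
  by rewrite WE ?elems_cons ?mem_cat ?inE ?eqxx ?orbT // pref_cat (negbTE hY) /= eqxx.
case: (k =P h') => [->|/eqP kh'] /=.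
  by rewrite zsem'_head.
apply: IH => //; first by rewrite /= hb.
move=> x xb; rewrite WE ?elems_cons ?mem_cat ?inE ?xb ?orbT // pref_cat.
have xY : x \in Y' = false by apply/negP => xY; move: (Yb _ xY); rewrite xb.
rewrite xY /=; case: eqP => [E|_] //.
by move: hb; rewrite -E xb.
Qed.

Lemma zsem_pref n (bs : blocks n) v k : uniq (elems bs) ->
  zsem bs (pref 0 (elems bs) v) k = catTo 0 bs v k.
Proof.
case: bs => [//|[h Y] bs] ue /=.
have [uY hY hb ub Yb] := uniq_elems_cons ue.
case: ifP => kY.
  have kh : k != h by apply: contra hY => /eqP <-.
  rewrite (negbTE kh) catTo_out ?(Yb _ kY) //.
  rewrite -(@dif_pref _ 0 Y v k uY); apply: dif_ext => x.
  rewrite elems_cons pref_cat inE => /orP[/eqP->|->] //; by rewrite kY.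
case: (k =P h) => [->|/eqP kh].
  by rewrite zsem'_head elems_cons pref_cat (negbTE hY) /= eqxx.
rewrite (@zsem'_pref _ _ _ (0 + sumv Y v + v h) v) //.
- case: ifP => // kb; rewrite catTo_out ?kb // pref_out //.
  by rewrite elems_cons mem_cat inE kY (negbTE kh) kb.
- by rewrite /= hb.
- by rewrite elems_cons pref_cat (negbTE hY) /= eqxx.
- move=> x xb; rewrite elems_cons pref_cat.
  have xY : x \in Y = false by apply/negP => xY; move: (Yb _ xY); rewrite xb.
  rewrite xY /=; case: eqP => [E|_] //.
  by move: hb; rewrite -E xb.
Qed.

Definition catc n (acc : 'I_n) st : seq (layer n) :=
  Zc (mkb acc st) ++ LF (elems (mkb acc st)).

Lemma catc_sem n (acc : 'I_n) st v k : uniq (acc :: map snd st) ->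
  csem (catc acc st) v k = catsem acc st v k.
Proof.
move=> u; have ue : uniq (elems (mkb acc st)) by rewrite (perm_uniq (elems_mkb acc st)).
by rewrite catsemE // /catc csem_cat (csem_ext _ (LF_sem v ue)) Zc_sem // zsem_pref.
Qed.

Lemma Zc'_valid n (h : 'I_n) bs : uniq (h :: elems bs) -> all valid (Zc' h bs).
Proof.
elim: bs h => [|[h' Y'] bs IH] h //= /andP[hn ue].
have [uY hY hb ub Yb] := uniq_elems_cons ue.
apply: merge_valid.
- move=> x /invLF_supp xh; apply/negP => /Zc'_supp; rewrite inE.
  move: xh; rewrite inE => /orP[/eqP->|xY].
    by move: hn; rewrite elems_cons mem_cat inE negb_or => /andP[_ /norP[/negbTE-> /negbTE->]].
  case/orP=> [/eqP E|]; first by move: hY; rewrite -E xY.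
  by rewrite (negbTE (Yb _ xY)).
- apply: invLF_valid; rewrite /= uY andbT; move: hn; rewrite elems_cons mem_cat negb_or.
  by case/andP.
- by apply: IH; rewrite /= hb.
Qed.

Lemma Zc_valid n (bs : blocks n) : uniq (elems bs) -> all valid (Zc bs).
Proof.
case: bs => [|[h Y] bs] //= ue.
have [uY hY hb ub Yb] := uniq_elems_cons ue.
apply: merge_valid.
- move=> x /invLF_supp xY; apply/negP => /Zc'_supp; rewrite inE => /orP[/eqP E|].
    by move: hY; rewrite -E xY.
  by rewrite (negbTE (Yb _ xY)).
- exact: invLF_valid.
- by apply: Zc'_valid; rewrite /= hb.
Qed.

Lemma Zc'_size n (h : 'I_n) bs k : (size (h :: elems bs) < 2 ^ k)%N -> (size (Zc' h bs) <= 2 * k)%N.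
Proof.
elim: bs h => [|[h' Y'] bs IH] h //= sk.
rewrite merge_size geq_max; apply/andP; split.
  apply: invLF_size; apply: leq_ltn_trans sk; rewrite elems_cons /= size_cat /=.
  by rewrite ltnS leq_addr.
apply: IH; apply: leq_ltn_trans sk; rewrite elems_cons /= size_cat /= ltnS.
lia.
Qed.

Lemma Zc_size n (bs : blocks n) k : (size (elems bs) < 2 ^ k)%N -> (size (Zc bs) <= 2 * k)%N.
Proof.
case: bs => [|[h Y] bs] //= sk.
rewrite merge_size geq_max; apply/andP; split.
  apply: invLF_size; apply: leq_ltn_trans sk; rewrite elems_cons size_cat leq_addr //.
apply: Zc'_size; apply: leq_ltn_trans sk; rewrite elems_cons size_cat /=.
by rewrite leq_addl.
Qed.

Lemma catc_valid n (acc : 'I_n) st : uniq (acc :: map snd st) -> all valid (catc acc st).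
Proof.
move=> u; have ue : uniq (elems (mkb acc st)) by rewrite (perm_uniq (elems_mkb acc st)).
by rewrite /catc all_cat Zc_valid // LFf_valid.
Qed.

Lemma catc_supp n (acc : 'I_n) st : {subset csupp (catc acc st) <= acc :: map snd st}.
Proof.
move=> x; rewrite /catc /csupp map_cat flatten_cat mem_cat -(perm_mem (elems_mkb acc st)).
by case/orP=> [/Zc_supp|/LFf_supp].
Qed.

Lemma catc_size n (acc : 'I_n) st k : ((size st).+1 < 2 ^ k)%N -> (size (catc acc st) <= 4 * k)%N.
Proof.
move=> sk; have se : size (elems (mkb acc st)) = (size st).+1.
  by rewrite (perm_size (elems_mkb acc st)) /= size_map.
rewrite /catc size_cat (_ : 4 * k = 2 * k + 2 * k)%N; last by lia.
by rewrite leq_add // ?Zc_size ?LF_size // se.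
Qed.


Definition node_layer n (b : bool) (l r : ctree n) : layer n :=
  if b then [:: (qidx l, qidx r)] else [:: (qidx r, qidx l)].

Fixpoint tsem n (t : ctree n) (v : vec n) : vec n :=
  match t with
  | CLeaf _ => v
  | CNode b l r => lsem (node_layer b l r) (tsem r (tsem l v))
  end.

Lemma qidx_mem n (t : ctree n) : qidx t \in leaves t.
Proof.
elim: t => [i|b l IHl r IHr] /=; first by rewrite inE.
by case: b; rewrite mem_cat ?IHl ?IHr ?orbT.
Qed.

Lemma tsem_local n (t : ctree n) : local (leaves t) (tsem t).
Proof.
elim: t => [i|b l IHl r IHr] /=; first exact: local_id.
have sl : {subset leaves l <= leaves l ++ leaves r} by move=> x; rewrite mem_cat => ->.
have sr : {subset leaves r <= leaves l ++ leaves r} by move=> x; rewrite mem_cat orbC => ->.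
apply: (@local_comp _ _ (lsem (node_layer b l r)) (fun v => tsem r (tsem l v))).
  apply: local_sub (lsem_local _) => x; rewrite /node_layer.
  by case: b; rewrite /supp /= !inE => /orP[/eqP->|/eqP->]; rewrite ?(sl _ (qidx_mem l)) ?(sr _ (qidx_mem r)).
apply: (@local_comp _ _ (tsem r) (tsem l)); [exact: local_sub IHr|exact: local_sub IHl].
Qed.

Lemma tsem_ext n (t : ctree n) v w : v =1 w -> tsem t v =1 tsem t w.
Proof.
elim: t v w => [i|b l IHl r IHr] v w H //=.
by apply: lsem_ext; apply: IHr; apply: IHl.
Qed.

Fixpoint hp n (t : ctree n) : 'I_n * seq (bool * ctree n) :=
  match t with
  | CLeaf i => (i, [::])
  | CNode b l r =>
      if (size (leaves l) <= size (leaves r))%N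
      then ((hp r).1, rcons (hp r).2 (~~ b, l))
      else ((hp l).1, rcons (hp l).2 (b, r))
  end.

Definition qs n (st : seq (bool * ctree n)) := [seq (p.1, qidx p.2) | p <- st].

Fixpoint catacc n (acc : 'I_n) (st : seq (bool * 'I_n)) : 'I_n :=
  match st with
  | [::] => acc
  | (f, a) :: st' => catacc (if f then a else acc) st'
  end.

Lemma catsem_rcons n (acc : 'I_n) st f a v :
  catsem acc (rcons st (f, a)) v = lsem (gate f (catacc acc st) a) (catsem acc st v).
Proof. by elim: st acc v => [|[g b] st IH] acc v //=. Qed.

Lemma catacc_rcons n (acc : 'I_n) st f a :
  catacc acc (rcons st (f, a)) = if f then a else catacc acc st.
Proof. by elim: st acc => [|[g b] st IH] acc //=. Qed.

Lemma hp_qidx n (t : ctree n) : qidx t = catacc (hp t).1 (qs (hp t).2).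
Proof.
elim: t => [i|b l IHl r IHr] //=.
case: leqP => _; rewrite /= /qs map_rcons -/(qs _) catacc_rcons /=.
  by case: b => /=; rewrite -?IHr.
by case: b => /=; rewrite -?IHl.
Qed.

Fixpoint lights n (st : seq (bool * ctree n)) (v : vec n) : vec n :=
  if st is p :: st' then tsem p.2 (lights st' v) else v.

Lemma lights_rcons n (st : seq (bool * ctree n)) p v :
  lights (rcons st p) v = lights st (tsem p.2 v).
Proof. by elim: st => [|q st IH] //=; rewrite IH. Qed.

Lemma catsem_ext n (acc : 'I_n) st v w : v =1 w -> catsem acc st v =1 catsem acc st w.
Proof.
elim: st acc v w => [|[f a] st IH] acc v w H //=.
by apply: IH; apply: lsem_ext.
Qed.

Lemma hp_sem n (t : ctree n) v : uniq (leaves t) ->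
  tsem t v =1 catsem (hp t).1 (qs (hp t).2) (lights (hp t).2 v).
Proof.
elim: t v => [i|b l IHl r IHr] v //= u.
have [ul ur dis] : [/\ uniq (leaves l), uniq (leaves r) &
    forall x, x \in leaves l -> x \notin leaves r].
  move: u; rewrite cat_uniq => /and3P[-> hs ->]; split=> // x xl.
  by apply: contra hs => xr; apply/hasP; exists x.
case: leqP => _ k; rewrite /= /qs map_rcons -/(qs _) catsem_rcons lights_rcons /=.
  rewrite -hp_qidx /node_layer; rewrite (lsem_ext _ (IHr _ ur)).
  by case: b.
rewrite (lsem_ext _ (local_commute (tsem_local r) (tsem_local l) _ v)); last first.
  by move=> x xr; apply/negP => xl; move: (dis x xl); rewrite xr.
rewrite -hp_qidx /node_layer; rewrite (lsem_ext _ (IHl _ ul)).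
by case: b.
Qed.

Lemma hp_le n b (l r : ctree n) : (size (leaves l) <= size (leaves r))%N ->
  hp (CNode b l r) = ((hp r).1, rcons (hp r).2 (~~ b, l)).
Proof. by move=> h /=; rewrite h. Qed.

Lemma hp_gt n b (l r : ctree n) : (size (leaves r) < size (leaves l))%N ->
  hp (CNode b l r) = ((hp l).1, rcons (hp l).2 (b, r)).
Proof. by move=> h /=; rewrite leqNgt h. Qed.

Lemma flatten_rcons' {T : Type} (ss : seq (seq T)) s : flatten (rcons ss s) = flatten ss ++ s.
Proof. by rewrite -cats1 flatten_cat /= cats0. Qed.

Definition hpl n (t : ctree n) := (hp t).1 :: map snd (qs (hp t).2).
Definition hpf n (t : ctree n) := flatten [seq leaves p.2 | p <- (hp t).2].

Lemma hp_props n (t : ctree n) : uniq (leaves t) ->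
  [/\ uniq (hpl t), {subset hpl t <= leaves t}, uniq (hpf t),
      {subset hpf t <= leaves t} &
      all (fun p => (size (leaves p.2)).*2 <= size (leaves t))%N (hp t).2].
Proof.
rewrite /hpl /hpf.
elim: t => [i|b l IHl r IHr]; first by move=> _; split=> // x.
rewrite [leaves (CNode _ _ _)]/= cat_uniq => /and3P[ul hs ur].
have dis : forall x, x \in leaves r -> x \notin leaves l.
  by move=> x xr; apply: contra hs => xl; apply/hasP; exists x.
have [u1 s1 u2 s2 a2] := IHl ul; have [u1' s1' u2' s2' a2'] := IHr ur.
case: (leqP (size (leaves l)) (size (leaves r))) => hlr;
  [rewrite (hp_le b hlr) | rewrite (hp_gt b hlr)]; rewrite ![(_, rcons _ _).1]/= ![(_, rcons _ _).2]/=.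
all: rewrite /qs !map_rcons -/(qs _) flatten_rcons' /=.
- have qn : qidx l \notin (hp r).1 :: map snd (qs (hp r).2).
    by apply/negP => /s1' /dis; rewrite qidx_mem.
  move: qn u1'; rewrite /= inE negb_or mem_rcons inE => /andP[q0 qM] /andP[a0M uM].
  rewrite negb_or eq_sym q0 a0M rcons_uniq qM uM cat_uniq u2' ul /=.
  split=> //.
  + move=> x; rewrite inE mem_rcons inE => /or3P[/eqP->|/eqP->|xM].
    * by rewrite mem_cat (s1' (hp r).1) ?inE ?eqxx ?orbT.
    * by rewrite mem_cat qidx_mem.
    * by rewrite mem_cat (s1' x) ?inE ?xM ?orbT.
  + by rewrite andbT; apply/hasPn => x xl; apply/negP => /s2' /dis; rewrite xl.
  + by move=> x; rewrite mem_cat => /orP[/s2' xr|xl]; rewrite mem_cat ?xr ?xl ?orbT.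
  + rewrite all_rcons /= size_cat -addnn leq_add2l hlr /=.
    apply: sub_all a2' => p /= h; apply: leq_trans h _; exact: leq_addl.
- have qn : qidx r \notin (hp l).1 :: map snd (qs (hp l).2).
    by apply/negP => /s1 xl; move: (dis _ (qidx_mem r)); rewrite xl.
  move: qn u1; rewrite /= inE negb_or mem_rcons inE => /andP[q0 qM] /andP[a0M uM].
  rewrite negb_or eq_sym q0 a0M rcons_uniq qM uM cat_uniq u2 ur /=.
  split=> //.
  + move=> x; rewrite inE mem_rcons inE => /or3P[/eqP->|/eqP->|xM].
    * by rewrite mem_cat (s1 (hp l).1) ?inE ?eqxx ?orbT.
    * by rewrite mem_cat qidx_mem orbT.
    * by rewrite mem_cat (s1 x) ?inE ?xM ?orbT.
  + by rewrite andbT; apply/hasPn => x xr; apply/negP => /s2 xl; move: (dis _ xr); rewrite xl.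
  + by move=> x; rewrite mem_cat => /orP[/s2 xl|xr]; rewrite mem_cat ?xr ?xl ?orbT.
  + rewrite all_rcons /= size_cat -addnn leq_add2r (ltnW hlr) /=.
    apply: sub_all a2 => p /= h; apply: leq_trans h _; exact: leq_addr.
Qed.

Lemma leaves_gt0 n (t : ctree n) : (0 < size (leaves t))%N.
Proof. by elim: t => [//|b l IHl r IHr] /=; rewrite size_cat addn_gt0 IHl. Qed.

Definition circ_ok n (t : ctree n) (B : nat) (c : seq (layer n)) :=
  [/\ all valid c, {subset csupp c <= leaves t}, (size c <= B)%N &
      forall v, csem c v =1 tsem t v].



Lemma lights_circ n (st : seq (bool * ctree n)) B :
  foldr (fun p P => (exists c, circ_ok p.2 B c) /\ P) True st ->
  uniq (flatten [seq leaves p.2 | p <- st]) ->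
  exists cL : seq (layer n), [/\ all valid cL, {subset csupp cL <= flatten [seq leaves p.2 | p <- st]},
     (size cL <= B)%N & forall v, csem cL v =1 lights st v].
Proof.
elim: st => [|p st IH] /=; first by move=> _ _; exists [::]; split=> // x.
case=> [[cp [vp sp zp ep]] H] u.
move: u; rewrite cat_uniq => /and3P[up hs ur].
have [cL [vL sL zL eL]] := IH H ur.
have dis : forall x, x \in csupp cp -> x \notin csupp cL.
  move=> x /sp xp; apply/negP => /sL xr; move: hs; apply/negP; rewrite negbK.
  by apply/hasP; exists x.
exists (mergec cp cL); split.
- exact: merge_valid.
- by move=> x /merge_csupp /orP[/sp|/sL]; rewrite mem_cat => ->; rewrite ?orbT.
- by rewrite merge_size geq_max zp.
- move=> v x; rewrite merge_sem // ep.
  by apply: tsem_ext => y; rewrite eL.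
Qed.

Lemma main_circ k : forall n (t : ctree n), uniq (leaves t) ->
  (size (leaves t) < 2 ^ k)%N -> exists c, circ_ok t (4 * k ^ 2) c.
Proof.
elim: k => [|k IH] n t ut sk.
  by move: sk (leaves_gt0 t); rewrite expn0 ltnS leqn0 => /eqP->.
have [u1 s1 u2 s2 a2] := hp_props ut.
have H : foldr (fun p P => (exists c, circ_ok p.2 (4 * k ^ 2) c) /\ P) True (hp t).2.
  have uf := u2; rewrite /hpf in uf.
  elim: (hp t).2 a2 uf => [//|p st IHs] /= /andP[hp ast]; rewrite cat_uniq => /and3P[up _ ust].
  split; last exact: IHs.
  apply: IH => //; rewrite -(ltn_pmul2l (isT : (0 < 2)%N)) -expnS mul2n.
  exact: leq_ltn_trans hp sk.
have [cL [vL sL zL eL]] := lights_circ H u2.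
have sz : (size (hpl t) <= size (leaves t))%N by apply: uniq_leq_size.
exists (catc (hp t).1 (qs (hp t).2) ++ cL); split.
- by rewrite all_cat catc_valid.
- move=> x; rewrite /csupp map_cat flatten_cat mem_cat -!/(csupp _).
  case/orP=> [/catc_supp /s1 //|/sL /s2 //].
- rewrite size_cat; apply: leq_trans (leq_add (catc_size _ (k := k.+1) _) zL) _.
    by apply: leq_ltn_trans sk; rewrite /qs size_map; move: sz; rewrite /hpl /= /qs !size_map.
  by rewrite -!mulnn; nia.
- move=> v x; rewrite csem_cat (csem_ext _ (eL v)) catc_sem //.
  by rewrite hp_sem.
Qed.


Definition lmx n (L : layer n) : mxF2 n := 1%:M + \sum_(p <- L) delta_mx p.2 p.1.
Definition colv n (v : vec n) : 'cV['F_2]_n := \col_j v j.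

Lemma delta_col n (a b : 'I_n) (v : vec n) i :
  (delta_mx a b *m colv v) i 0 = if i == a then v b else 0.
Proof.
rewrite mxE (bigD1 b) //= big1 ?addr0; last first.
  by move=> j jb; rewrite !mxE (negbTE jb) andbF mul0r.
by rewrite !mxE eqxx andbT; case: (i == a); rewrite ?mul1r ?mul0r.
Qed.

Lemma addmx_ij n (A B : 'cV['F_2]_n) i : (A + B) i 0 = A i 0 + B i 0.
Proof. by rewrite mxE. Qed.

Lemma lmx_act n (L : layer n) v : lmx L *m colv v = colv (lsem L v).
Proof.
apply/matrixP => i j; rewrite (ord1 j) {j} [RHS]mxE /lsem.
elim: L => [|p L IH] /=.
  by rewrite /lmx big_nil addr0 mul1mx mxE addr0.
rewrite /lmx big_cons addrCA mulmxDl addmx_ij -/(lmx L) IH delta_col.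
by rewrite addrC addrA.
Qed.

Lemma mxprod_act n (c : seq (layer n)) v : mxprod (map (@lmx n) c) *m colv v = colv (csem c v).
Proof.
elim: c => [|L c IH] /=; first by rewrite mul1mx.
by rewrite -mulmxA IH lmx_act.
Qed.

Lemma node_lmx n b (l r : ctree n) : node_mx b l r = lmx (node_layer b l r).
Proof. by rewrite /node_mx /node_layer /lmx /Rmx /isR; case: b; rewrite big_seq1. Qed.

Lemma tree_act n (t : ctree n) v : tree_mx t *m colv v = colv (tsem t v).
Proof.
elim: t v => [i|b l IHl r IHr] v /=; first by rewrite mul1mx.
by rewrite -!mulmxA IHl IHr node_lmx lmx_act.
Qed.

Lemma colv_ext n (v w : vec n) : v =1 w -> colv v = colv w.
Proof. by move=> H; apply/matrixP => i j; rewrite !mxE H. Qed.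

Lemma col_delta n (M : mxF2 n) i j : (M *m colv (fun k => (k == j)%:R)) i 0 = M i j.
Proof.
rewrite mxE (bigD1 j) //= big1 ?addr0.
  by rewrite mxE eqxx mulr1.
by move=> k kj; rewrite mxE (negbTE kj) mulr0.
Qed.

Lemma mx_eq_act n (M N : mxF2 n) : (forall v, M *m colv v = N *m colv v) -> M = N.
Proof.
move=> H; apply/matrixP => i j.
by rewrite -!col_delta H.
Qed.

Close Scope ring_scope.

Theorem theorem3p5 :
  exists C : nat, (0 < C)%N /\
    forall (n : nat), (2 <= n)%N ->
    forall t : ctree n, well_labeled t ->
    exists ms : seq (mxF2 n),
      (size ms <= C * (trunc_log 2 n) ^ 2)%N /\
      (forall A, A \in ms -> parallel_elim A) /\
      tree_mx t = mxprod ms.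
Proof.
exists 16; split=> // n n2 t [ut st].
have T0 : (0 < trunc_log 2 n)%N by rewrite trunc_log_gt0.
have sk : (size (leaves t) < 2 ^ (trunc_log 2 n).+1)%N by rewrite st trunc_log_ltn.
have [c [vc _ zc ec]] := main_circ ut sk.
exists (map (@lmx n) c); split; [|split].
- rewrite size_map; apply: leq_trans zc _.
  move: T0; set T := trunc_log 2 n => T0; rewrite -!mulnn; nia.
- move=> A /mapP[L Lc ->]; exists L; split=> //.
  exact: (allP vc).
- apply: mx_eq_act => v; rewrite tree_act mxprod_act; apply: colv_ext => x.
  by rewrite ec.
Qed.
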